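(* Let $k$ be a real constant and, on the region $x^2-y^2>0$, let $V(x,y)=k(x^2-y^2)^{-2/3}$. With $L=x\dot y-y\dot x$, the function $$J=(\dot y^2-\dot x^2)L+4V(x,y)\,(y\dot x+x\dot y)$$ is a first integral of $\ddot x=-V_{,x}$, $\ddot y=-V_{,y}$.
   Context: A first integral is a function of $(t,x,y,\dot x,\dot y)$ whose total time derivative vanishes along every solution of the given equations of motion. *)

(* Defs.v *)
From Stdlib Require Import Reals.
From Coquelicot Require Import Coquelicot.
Open Scope R_scope.

(* Potential V(x,y) = k (x^2 - y^2)^(-2/3), meaningful on x^2 - y^2 > 0
   (Rpower a b = exp (b * ln a), the real power for a > 0). *)
Definition V (k x y : R) : R := k * Rpower (x ^ 2 - y ^ 2) (- (2 / 3)).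

Definition Lmom (x y vx vy : R) : R := x * vy - y * vx.

Definition J (k x y vx vy : R) : R :=
  (vy ^ 2 - vx ^ 2) * Lmom x y vx vy + 4 * V k x y * (y * vx + x * vy).

(* Main.v *)
Require Import Defs.
From Stdlib Require Import Reals Lra.
From Coquelicot Require Import Coquelicot.
Open Scope R_scope.

Lemma dmul (f g : R -> R) t df dg : is_derive f t df -> is_derive g t dg ->
  is_derive (fun s => f s * g s) t (df * g t + f t * dg).
Proof. intros H1 H2. apply (is_derive_mult f g t df dg H1 H2). intros; apply Rmult_comm. Qed.
Lemma dplus (f g : R -> R) t df dg : is_derive f t df -> is_derive g t dg ->
  is_derive (fun s => f s + g s) t (df + dg).
Proof. intros H1 H2. apply (is_derive_plus f g t df dg H1 H2). Qed.
Lemma dminus (f g : R -> R) t df dg : is_derive f t df -> is_derive g t dg ->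
  is_derive (fun s => f s - g s) t (df - dg).
Proof. intros H1 H2. apply (is_derive_minus f g t df dg H1 H2). Qed.
Lemma dconst (c : R) t : is_derive (fun _ => c) t 0.
Proof. apply (is_derive_const c t). Qed.
Lemma dpow2 (f : R -> R) t df : is_derive f t df ->
  is_derive (fun s => f s ^ 2) t (2 * df * f t).
Proof. intros H. pose proof (is_derive_pow f 2 t df H) as H'. simpl in H'.
  replace (2 * df * f t) with ((1+1) * df * (f t * 1)) by ring. exact H'. Qed.
Lemma dRpow (f : R -> R) t df e : 0 < f t -> is_derive f t df ->
  is_derive (fun s => Rpower (f s) e) t (df * (e * Rpower (f t) (e - 1))).
Proof. intros Hp H.
  apply (is_derive_comp (fun u => Rpower u e) f t). 2: exact H.
  apply is_derive_Reals. apply derivable_pt_lim_power. exact Hp. Qed.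

Lemma did t : is_derive (fun u : R => u) t 1.
Proof. apply (@is_derive_id R_AbsRing). Qed.

Lemma Rpow_m1 (S e : R) : 0 < S -> Rpower S (e - 1) = Rpower S e / S.
Proof. intros H. unfold Rminus. rewrite Rpower_plus, Rpower_Ropp, Rpower_1 by exact H.
  reflexivity. Qed.

Lemma derVx k x0 y0 : 0 < x0 ^ 2 - y0 ^ 2 ->
  Derive (fun u => V k u y0) x0 =
  k * ((2 * 1 * x0 - 0) * (- (2/3) * (Rpower (x0^2 - y0^2) (-(2/3)) / (x0^2-y0^2)))).
Proof. intros H. apply is_derive_unique. unfold V.
  rewrite <- Rpow_m1 by exact H.
  apply (is_derive_scal (fun u => Rpower (u^2 - y0^2) (-(2/3)))).
  apply (dRpow (fun u => u^2 - y0^2)). exact H.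
  apply dminus. apply (dpow2 (fun u => u)). apply did. apply dconst. Qed.

Lemma derVy k x0 y0 : 0 < x0 ^ 2 - y0 ^ 2 ->
  Derive (fun w => V k x0 w) y0 =
  k * ((0 - 2 * 1 * y0) * (- (2/3) * (Rpower (x0^2 - y0^2) (-(2/3)) / (x0^2-y0^2)))).
Proof. intros H. apply is_derive_unique. unfold V.
  rewrite <- Rpow_m1 by exact H.
  apply (is_derive_scal (fun u => Rpower (x0^2 - u^2) (-(2/3)))).
  apply (dRpow (fun u => x0^2 - u^2)). exact H.
  apply dminus. apply dconst. apply (dpow2 (fun u => u)). apply did. Qed.

Lemma is_derive_eq (f : R -> R) t d : is_derive f t d -> d = 0 -> is_derive f t 0.
Proof. intros H ->. exact H. Qed.

Ltac dtac :=
  match goal with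
  | |- is_derive ?h _ _ => is_var h; eassumption
  | |- is_derive (fun s => ?h s) _ _ => is_var h; eassumption
  | |- is_derive (fun s => @?f s + @?g s) _ _ => eapply (dplus f g); [dtac|dtac]
  | |- is_derive (fun s => @?f s - @?g s) _ _ => eapply (dminus f g); [dtac|dtac]
  | |- is_derive (fun s => @?f s * @?g s) _ _ => eapply (dmul f g); [dtac|dtac]
  | |- is_derive (fun s => @?f s ^ 2) _ _ => eapply (dpow2 f); dtac
  | |- is_derive (fun s => Rpower (@?f s) ?e) _ _ => eapply (dRpow f _ _ e); [assumption|dtac]
  | |- is_derive (fun s => ?c) _ _ => apply dconst
  | |- is_derive ?f _ _ => eassumption
  end.

Theorem mainTheorem5 (k a b : R) (x y vx vy : R -> R) :
  (forall t, a < t < b ->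
     0 < x t ^ 2 - y t ^ 2 /\
     is_derive x t (vx t) /\
     is_derive y t (vy t) /\
     is_derive vx t (- Derive (fun u => V k u (y t)) (x t)) /\
     is_derive vy t (- Derive (fun w => V k (x t) w) (y t))) ->
  forall t, a < t < b ->
    is_derive (fun s => J k (x s) (y s) (vx s) (vy s)) t 0.
Proof.
  intros Hall t Ht.
  destruct (Hall t Ht) as (Hs & Hx & Hy & Hvx & Hvy).
  rewrite derVx in Hvx by exact Hs. rewrite derVy in Hvy by exact Hs.
  unfold J, Lmom, V.
  eapply is_derive_eq.
  - dtac.
  - rewrite Rpow_m1 by exact Hs.
    set (P := Rpower (x t ^ 2 - y t ^ 2) (- (2 / 3))).
    match goal with |- ?l = ?r => change (@eq R l r) end. field. lra.
Qed.
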